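(* Let $\bm{A}=[\bm{A}_1\ \bm{A}_2]\in\mathbb{R}^{m\times(n_1+n_2)}$ have full column rank with $\bm{A}_j^\top\bm{A}_j=\bm{I}_j$, $\bm{C}:=\bm{A}_2^\top\bm{A}_1\ne0$, and suppose $r:=\operatorname{rank}(\bm{C})=\min\{n_1,n_2\}$. With $S_{11}:=[1,\infty)\times[1,\infty)$, $\min_{(\gamma_1,\gamma_2)\in S_{11}}\rho(\bm{M}(\gamma_1,\gamma_2))=\dfrac{\sqrt{1-\lambda_r(\bm{C}\bm{C}^\top)}-\sqrt{1-\lambda_1(\bm{C}\bm{C}^\top)}}{\sqrt{1-\lambda_r(\bm{C}\bm{C}^\top)}+\sqrt{1-\lambda_1(\bm{C}\bm{C}^\top)}}.$
   Context: $\rho$: spectral radius; $\lambda_i$: $i$-th largest eigenvalue. $\bm{M}(\gamma_1,\gamma_2)=\begin{bmatrix}(1-\gamma_1)\bm{I}_1&-\gamma_1\bm{C}^\top\\-\gamma_2(1-\gamma_1)\bm{C}&(1-\gamma_2)\bm{I}_2+\gamma_1\gamma_2\bm{C}\bm{C}^\top\end{bmatrix}$, the two-block gradient descent iteration matrix with stepsizes $\gamma_1,\gamma_2$. *)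

(* Defs.v *)
From mathcomp Require Import all_boot all_order all_algebra.
From mathcomp Require Import reals.
From mathcomp.real_closed Require Import complex.
Set Implicit Arguments. Unset Strict Implicit. Unset Printing Implicit Defensive.
Import Order.TTheory GRing.Theory Num.Theory.
Local Open Scope ring_scope.

Section Defs.
Variable R : realType.

Definition cmx n (M : 'M[R]_n) : 'M[R[i]]_n := map_mx (fun x : R => Complex x 0) M.

(* the complex eigenvalues of M, listed with algebraic multiplicity
   (the roots of its characteristic polynomial in R[i]) *)
Definition ceigs n (M : 'M[R]_n) : seq R[i] :=
  projT1 (closed_field_poly_normal (char_poly (cmx M))).

Definition cmod (z : R[i]) : R := Num.sqrt (complex.Re z ^+ 2 + complex.Im z ^+ 2).

Definition spectral_radius n (M : 'M[R]_n) : R :=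
  \big[Num.max/0]_(z <- ceigs M) cmod z.

(* lambda_i(M) (1-indexed): i-th largest eigenvalue of M, for M with real
   spectrum (e.g. symmetric), counted with multiplicity. *)
Definition eig_desc n (i : nat) (M : 'M[R]_n) : R :=
  nth 0 (sort (fun x y : R => y <= x) [seq complex.Re z | z <- ceigs M]) i.-1.

Definition gd_iter_mx n1 n2 (C : 'M[R]_(n2, n1)) (g1 g2 : R) : 'M[R]_(n1 + n2) :=
  block_mx ((1 - g1)%:M) (- g1 *: C^T)
           (- (g2 * (1 - g1)) *: C) ((1 - g2)%:M + (g1 * g2) *: (C *m C^T)).

End Defs.
Arguments gd_iter_mx {R n1 n2} C g1 g2.
Arguments spectral_radius {R n} M.
Arguments eig_desc {R n} i M.

(* Main.v *)
Require Import Defs.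
From mathcomp Require Import all_boot all_order all_algebra.
From mathcomp Require Import reals.
From mathcomp.real_closed Require Import complex.
From mathcomp Require Import ring lra zify.
Import Order.TTheory GRing.Theory Num.Theory.
Local Open Scope ring_scope.

Module Aux.
Set Implicit Arguments. Unset Strict Implicit. Unset Printing Implicit Defensive.

Section S.
Variable R : realType.
Local Notation C := (R[i]).
Local Notation toC := (real_complex R).

Lemma cmxE n (M : 'M[R]_n) : cmx M = map_mx toC M.
Proof. by apply/matrixP => i j; rewrite !mxE. Qed.

Lemma ceigs_char n (M : 'M[R]_n) :
  char_poly (cmx M) = \prod_(z <- ceigs M) ('X - z%:P).
Proof.
rewrite /ceigs; case: (closed_field_poly_normal _) => r /= Hr.
by rewrite {1}Hr (monicP (char_poly_monic _)) scale1r.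
Qed.

Lemma ceigsP n (M : 'M[R]_n) z : (z \in ceigs M) = eigenvalue (cmx M) z.
Proof. by rewrite eigenvalue_root_char ceigs_char root_prod_XsubC. Qed.

Lemma size_ceigs n (M : 'M[R]_n) : size (ceigs M) = n.
Proof.
have := size_char_poly (cmx M); rewrite ceigs_char size_prod_XsubC.
by case.
Qed.

Definition hn n (w : 'rV[C]_n) : C := \sum_(i < n) w 0 i * conjc (w 0 i).

Lemma hn_ge0 n (w : 'rV[C]_n) : 0 <= hn w.
Proof. by apply: sumr_ge0 => i _; apply: mulcJ_ge0. Qed.

Lemma hn_eq0 n (w : 'rV[C]_n) : hn w = 0 -> w = 0.
Proof.
move=> /eqP; rewrite psumr_eq0 => [/allP H|i _]; last exact: mulcJ_ge0.
apply/rowP => i; rewrite mxE; have := H i (mem_index_enum _).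
by rewrite mulf_eq0 conjc_eq0 orbb => /eqP.
Qed.

Lemma hn_gt0 n (w : 'rV[C]_n) : w != 0 -> 0 < hn w.
Proof.
move=> wn0; rewrite lt_def hn_ge0 andbT; apply/eqP => /hn_eq0 H.
by rewrite H eqxx in wn0.
Qed.

Lemma hnE n (w : 'rV[C]_n) : (w *m (map_mx conjc w)^T) 0 0 = hn w.
Proof. by rewrite mxE; apply: eq_bigr => i _; rewrite !mxE. Qed.

Lemma map_conj_real k n (G : 'M[R]_(k, n)) : map_mx conjc (map_mx toC G) = map_mx toC G.
Proof. by apply/matrixP => i j; rewrite !mxE conjc_real. Qed.

Lemma quadE k n (G : 'M[R]_(k, n)) (w : 'rV[C]_n) :
  (w *m map_mx toC (G^T *m G) *m (map_mx conjc w)^T) 0 0 = hn (w *m (map_mx toC G)^T).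
Proof.
rewrite -hnE.
have -> : map_mx conjc (w *m (map_mx toC G)^T) = map_mx conjc w *m (map_mx toC G)^T.
  by rewrite (map_mxM conjc) map_trmx map_conj_real.
by rewrite trmx_mul trmxK map_mxM !map_trmx !mulmxA.
Qed.

Lemma psd_eig k n (G : 'M[R]_(k, n)) (w : 'rV[C]_n) (mu : C) :
  w != 0 -> w *m map_mx toC (G^T *m G) = mu *: w ->
  0 <= mu /\ (mu = 0 -> w *m (map_mx toC G)^T = 0).
Proof.
move=> wn0 Hw; have := quadE G w; rewrite Hw -scalemxAl mxE hnE => E.
have hp := hn_gt0 wn0.
have Emu : mu = hn (w *m (map_mx toC G)^T) / hn w.
  by rewrite -E mulfK // gt_eqF.
split; first by rewrite Emu divr_ge0 ?hn_ge0 // ltW.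
move=> mu0; apply: hn_eq0; by rewrite -E mu0 mul0r.
Qed.

End S.

Definition gdc (F : fieldType) n1 n2 (c : 'M[F]_(n2, n1)) (g1 g2 : F) : 'M[F]_(n1 + n2) :=
  block_mx ((1 - g1)%:M) (- g1 *: c^T)
           (- (g2 * (1 - g1)) *: c) ((1 - g2)%:M + (g1 * g2) *: (c *m c^T)).

Lemma gdc_eigE (F : fieldType) n1 n2 (c : 'M[F]_(n2, n1)) g1 g2 z (x : 'rV_n1) (y : 'rV_n2) :
  row_mx x y *m gdc c g1 g2 = z *: row_mx x y <->
  ((z + g1 - 1) *: x = (g2 * (g1 - 1)) *: (y *m c) /\
  (z + g2 - 1) *: y = - g1 *: (x *m c^T) + (g1 * g2) *: (y *m (c *m c^T))).
Proof.
rewrite /gdc mul_row_block scale_row_mx !mul_mx_scalar -!scalemxAr mulmxDr.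
rewrite mul_mx_scalar -scalemxAr.
set Y := y *m c; set X := x *m c^T; set W := y *m (c *m c^T).
split => [/eq_row_mx [h1 h2] | [h1 h2]].
  split; apply/rowP => j.
    move/rowP: (h1) => /(_ j); rewrite !mxE => h.
    have -> : (z + g1 - 1) * x 0 j = z * x 0 j - (1 - g1) * x 0 j by ring.
    by rewrite -h; ring.
  move/rowP: (h2) => /(_ j); rewrite !mxE => h.
  have -> : (z + g2 - 1) * y 0 j = z * y 0 j - (1 - g2) * y 0 j by ring.
  by rewrite -h; ring.
congr row_mx; apply/rowP => j.
  move/rowP: (h1) => /(_ j); rewrite !mxE => h.
  have -> : z * x 0 j = (z + g1 - 1) * x 0 j + (1 - g1) * x 0 j by ring.
  by rewrite h; ring.
move/rowP: (h2) => /(_ j); rewrite !mxE => h.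
have -> : z * y 0 j = (z + g2 - 1) * y 0 j + (1 - g2) * y 0 j by ring.
by rewrite h; ring.
Qed.

Lemma gdc_eigN (F : fieldType) n1 n2 (c : 'M[F]_(n2, n1)) g1 g2 z (x : 'rV_n1) (y : 'rV_n2) :
  (z + g1 - 1) *: x = (g2 * (g1 - 1)) *: (y *m c) ->
  (z + g2 - 1) *: y = - g1 *: (x *m c^T) + (g1 * g2) *: (y *m (c *m c^T)) ->
  ((z + g1 - 1) * (z + g2 - 1)) *: y = (g1 * g2 * z) *: (y *m (c *m c^T)).
Proof.
move=> E1 E2.
have e1 : (z + g1 - 1) *: (x *m c^T) = (g2 * (g1 - 1)) *: (y *m (c *m c^T)).
  by rewrite scalemxAl E1 -scalemxAl mulmxA.
move: e1 E2; set X := x *m c^T; set W := y *m (c *m c^T) => e1 E2; clearbody X W.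
apply/rowP => j; move/rowP: e1 => /(_ j); move/rowP: E2 => /(_ j).
rewrite !mxE => h2 h1.
have -> : (z + g1 - 1) * (z + g2 - 1) * y 0 j = (z + g1 - 1) * ((z + g2 - 1) * y 0 j) by ring.
rewrite h2.
have -> : (z + g1 - 1) * (- g1 * X 0 j + g1 * g2 * W 0 j) =
   - g1 * ((z + g1 - 1) * X 0 j) + (z + g1 - 1) * g1 * g2 * W 0 j by ring.
by rewrite h1; ring.
Qed.

Lemma gdc_eig_build (F : fieldType) n1 n2 (c : 'M[F]_(n2, n1)) g1 g2 z s (y : 'rV_n2) :
  y != 0 -> y *m (c *m c^T) = s *: y -> z + g1 - 1 != 0 ->
  (z + g1 - 1) * (z + g2 - 1) = g1 * g2 * z * s ->
  eigenvalue (gdc c g1 g2) z.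
Proof.
move=> yn0 Hy an0 hq.
set k := g2 * (g1 - 1) / (z + g1 - 1).
apply/eigenvalueP; exists (row_mx (k *: (y *m c)) y); last first.
  by apply: contra yn0; rewrite -row_mx0 => /eqP /eq_row_mx [_ ->].
apply/gdc_eigE; split.
  by rewrite scalerA /k mulrCA divff // mulr1.
rewrite -scalemxAl -mulmxA Hy !scalerA -scalerDl; congr (_ *: _).
apply: (mulfI an0); rewrite hq /k; field.
by [].
Qed.

Lemma cmx_gd (R : realType) n1 n2 (X : 'M[R]_(n2, n1)) g1 g2 :
  cmx (gd_iter_mx X g1 g2) =
  gdc (map_mx (real_complex R) X) (real_complex R g1) (real_complex R g2).
Proof.
rewrite cmxE /gd_iter_mx /gdc map_block_mx.
rewrite !map_mxD !map_mxZ !map_scalar_mx map_mxM map_trmx.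
by rewrite !(rmorphN, rmorphM, rmorphB, rmorph1).
Qed.

Lemma schurL (R : comNzRingType) n1 n2 (a : R) (B : 'M_(n1, n2)) (Cb : 'M_(n2, n1)) (D : 'M_n2) :
  a ^+ n2 * \det (block_mx a%:M B Cb D) = a ^+ n1 * \det (a *: D - Cb *m B).
Proof.
have E : block_mx 1%:M 0 (- Cb) a%:M *m block_mx a%:M B Cb D =
         block_mx a%:M B 0 (a *: D - Cb *m B).
  rewrite mulmx_block !mul1mx !mul0mx !addr0 mul_mx_scalar mul_scalar_mx.
  rewrite scalerN addNr mul_scalar_mx addrC mulNmx.
  by [].
have := congr1 determinant E.
rewrite det_mulmx det_lblock det_ublock det1 mul1r !det_scalar => ->.
by [].
Qed.

Lemma schurR (R : comNzRingType) n1 n2 (b : R) (A' : 'M_n1) (B : 'M_(n1, n2)) (Cb : 'M_(n2, n1)) :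
  b ^+ n1 * \det (block_mx A' B Cb b%:M) = b ^+ n2 * \det (b *: A' - B *m Cb).
Proof.
have E : block_mx b%:M (- B) 0 1%:M *m block_mx A' B Cb b%:M =
         block_mx (b *: A' - B *m Cb) 0 Cb b%:M.
  rewrite mulmx_block !mul1mx !mul0mx !add0r !mul_scalar_mx !mulNmx.
  by rewrite mul_mx_scalar subrr.
have := congr1 determinant E.
rewrite det_mulmx det_lblock det_ublock det1 mulr1 !det_scalar => ->.
by rewrite mulrC.
Qed.

Lemma sylvester (R : comNzRingType) n1 n2 (c : 'M[R]_(n2, n1)) :
  'X ^+ n2 * char_poly (c^T *m c) = 'X ^+ n1 * char_poly (c *m c^T).
Proof.
set T := block_mx ('X%:M : 'M[{poly R}]_n1) (map_mx polyC c^T) (map_mx polyC c) 1%:M.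
have h1 := schurL 'X (map_mx polyC c^T) (map_mx polyC c) 1%:M.
have h2 := schurR 1 ('X%:M : 'M[{poly R}]_n1) (map_mx polyC c^T) (map_mx polyC c).
rewrite !expr1n !mul1r scale1r in h2.
rewrite /char_poly /char_poly_mx !map_mxM -h2 h1.
by rewrite scalemx1.
Qed.

Lemma Xpow_eq (F : idomainType) a b (P Q : {poly F}) :
  P.[0] != 0 -> Q.[0] != 0 -> 'X ^+ a * P = 'X ^+ b * Q -> a = b.
Proof.
have key : forall a b (P Q : {poly F}), P.[0] != 0 -> (a < b)%N ->
    'X ^+ a * P = 'X ^+ b * Q -> False.
  move=> {}a {}b {}P {}Q P0 ab E.
  have : 'X ^+ a * P = 'X ^+ a * ('X ^+ (b - a) * Q).
    by rewrite mulrA -exprD subnKC // ltnW.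
  move/(mulfI (expf_neq0 _ (negbT (polyX_eq0 F)))) => EP.
  move: P0; rewrite EP hornerM horner_exp hornerX expr0n.
  have -> : (b - a == 0)%N = false by apply/negbTE; rewrite -lt0n subn_gt0.
  by rewrite mul0r eqxx.
move=> P0 Q0 E; case: (ltngtP a b) => // ab.
  by case: (key _ _ _ _ P0 ab E).
by case: (key _ _ _ _ Q0 ab (esym E)).
Qed.

Lemma prod_split (F : idomainType) (l : seq F) :
  \prod_(z <- l) ('X - z%:P) =
  'X ^+ (count (pred1 0) l) * \prod_(z <- l | z != 0) ('X - z%:P).
Proof.
rewrite (bigID (pred1 0)) /=; congr (_ * _).
rewrite (eq_bigr (fun _ => 'X)); last by move=> z /eqP ->; rewrite subr0.
rewrite big_const_seq; elim: (count _ _) => [|k IH] //=.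
by rewrite IH exprS.
Qed.

Lemma prod_nz0 (F : idomainType) (l : seq F) :
  (\prod_(z <- l | z != 0) ('X - z%:P)).[0] != 0.
Proof.
rewrite horner_prod prodf_seq_neq0; apply/allP => z _; apply/implyP => z0.
by rewrite hornerXsubC sub0r oppr_eq0.
Qed.

Section Sorting.
Variable R : realFieldType.
Implicit Types (L : seq R).
Local Notation geR := (fun x y : R => y <= x).
Local Notation S L := (sort geR L).

Lemma ge_nth L i j : (i <= j)%N -> (j < size L)%N -> nth 0 (S L) j <= nth 0 (S L) i.
Proof.
move=> ij jL.
have so : sorted geR (S L) by apply: sort_sorted => x y; exact: le_total.
have tr : transitive geR by move=> x y z h1 h2; exact: le_trans h2 h1.
have := sorted_leq_nth tr (fun x => lexx x) 0 so; apply; rewrite ?inE /= ?size_sort //.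
exact: leq_ltn_trans ij jL.
Qed.

Lemma nth_S_in L i : (i < size L)%N -> nth 0 (S L) i \in L.
Proof. by move=> iL; rewrite -(mem_sort geR) mem_nth // size_sort. Qed.

Lemma max_S L x : x \in L -> x <= nth 0 (S L) 0.
Proof.
rewrite -(mem_sort geR) => xS; rewrite -(nth_index 0 xS).
apply: ge_nth => //; by rewrite -(size_sort geR) index_mem.
Qed.

Lemma count_S L (a : pred R) : count a (S L) = count a L.
Proof. by apply/permP; rewrite perm_sort. Qed.

Lemma S_pos L r : (0 < r)%N -> (r <= size L)%N -> (forall x, x \in L -> 0 <= x) ->
  count (pred1 (0:R)%R) L = (size L - r)%N ->
  0 < nth 0 (S L) r.-1 /\ (forall x, x \in L -> x != 0 -> nth 0 (S L) r.-1 <= x).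
Proof.
move=> r0 rL ge0 hc.
have ge0S : forall k, (k < size L)%N -> 0 <= nth 0 (S L) k.
  by move=> k kL; apply: ge0; apply: nth_S_in.
have split_c : forall k, count (pred1 (0:R)%R) L = (count (pred1 (0:R)%R) (take k (S L)) + count (pred1 (0:R)%R) (drop k (S L)))%N.
  by move=> k; rewrite -count_cat cat_take_drop count_S.
split.
  rewrite lt_def ge0S ?andbT; last by rewrite prednK // ltnS.
  apply/negP => /eqP h.
  have : all (pred1 (0:R)%R) (drop r.-1 (S L)).
    apply/(all_nthP 0) => k; rewrite size_drop size_sort => kL.
    rewrite nth_drop /=; apply/eqP/le_anti; rewrite ge0S ?andbT; last by rewrite -ltn_subRL.
    by rewrite -[X in _ <= X]h; apply: ge_nth; rewrite ?leq_addr // -ltn_subRL.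
  rewrite all_count => /eqP hd.
  have := split_c r.-1; rewrite hd size_drop size_sort hc => E.
  have : (size L - r.-1 <= size L - r)%N by rewrite E leq_addl.
  rewrite leq_sub2lE //; move=> ?; lia.
move=> x xL xn0.
have xS : x \in S L by rewrite mem_sort.
have xpos : 0 < x by rewrite lt_def xn0 ge0.
set j := index x (S L).
have jL : (j < size L)%N by rewrite -(size_sort geR) index_mem.
have Ej : nth 0 (S L) j = x by rewrite nth_index.
case: (leqP j r.-1) => jr.
  by rewrite -Ej; apply: ge_nth jr (leq_trans _ rL); rewrite ltn_predL.
have : count (pred1 (0:R)%R) (take j.+1 (S L)) = 0%N.
  apply/eqP; rewrite -leqn0 leqNgt -has_count; apply/negP => /hasP [y yin /eqP y0].
  move/(nthP 0): yin => [k]; rewrite size_takel ?size_sort // => kj.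
  rewrite nth_take // y0 => nk.
  have : x <= nth 0 (S L) k by rewrite -Ej; apply: ge_nth.
  by rewrite nk leNgt xpos.
move=> ht; have := split_c j.+1; rewrite ht add0n hc => E.
have := count_size (pred1 (0:R)%R) (drop j.+1 (S L)); rewrite -E size_drop size_sort => hh.
have jr2 : (r <= j)%N by rewrite -(prednK r0). 
clearbody j; exfalso; have hh2 : (size L - r <= size L - j.+1)%N := hh; clear -hh2 jr2 jL; lia.
Qed.
End Sorting.

Section Q.
Local Open Scope complex_scope.
Variable R : realType.
Local Notation C := (R[i]).

Lemma cmodE (x y : R) : cmod (x +i* y) = Num.sqrt (x ^+ 2 + y ^+ 2).
Proof. by []. Qed.

Lemma quad_eq (x y B P : R) :
  (x +i* y) ^+ 2 + B%:C * (x +i* y) + P%:C = 0 <->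
  (x ^+ 2 - y ^+ 2 + B * x + P = 0 /\ 2 * x * y + B * y = 0)%R.
Proof.
rewrite expr2 /=; simpc.
split.
  by case=> e1 e2; split; [rewrite -[RHS]e1 | rewrite -[RHS]e2]; ring.
case=> e1 e2; apply/eqP; rewrite eq_complex /=; apply/andP; split; apply/eqP.
  by rewrite -[RHS]e1; ring.
by rewrite -[RHS]e2; ring.
Qed.

Lemma quad_mod (z : C) (B P : R) : z ^+ 2 + B%:C * z + P%:C = 0 ->
  (B ^+ 2 <= 4 * P)%R -> cmod z = Num.sqrt P.
Proof.
case: z => x y /quad_eq [e1 e2] hB; rewrite cmodE; congr Num.sqrt.
have : (y * (2 * x + B) = 0)%R by rewrite -[RHS]e2; ring.
move/eqP; rewrite mulf_eq0 => /orP [/eqP y0 | /eqP hx].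
  rewrite y0 in e1 *.
  have s0 := sqr_ge0 (2 * x + B).
  have h0 : ((2 * x + B) ^+ 2 = 0)%R by rewrite expr0n /= subr0 in e1; nra.
  move/eqP: h0; rewrite sqrf_eq0 => /eqP hx.
  nra.
nra.
Qed.
Lemma real_root (r B P : R) : (r ^+ 2 + B * r + P = 0)%R ->
  r%:C ^+ 2 + B%:C * r%:C + P%:C = 0.
Proof. move=> e; rewrite -complexr0; apply/quad_eq; split; [rewrite -[RHS]e; ring | ring]. Qed.

Lemma lb_quad (B P rho : R) : (0 <= rho)%R ->
  (forall z : C, z ^+ 2 + B%:C * z + P%:C = 0 -> (cmod z <= rho)%R) ->
  [/\ (P <= rho ^+ 2)%R, (0 <= rho ^+ 2 + B * rho + P)%R,
      (0 <= rho ^+ 2 - B * rho + P)%R & (B ^+ 2 <= 4 * rho ^+ 2)%R].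
Proof.
move=> rho0 H; set D := (B ^+ 2 - 4 * P)%R.
case: (lerP 0 D) => hD.
  set sD := Num.sqrt D.
  have sD2 : (sD ^+ 2 = D)%R by rewrite sqr_sqrtr.
  set r1 := ((- B + sD) / 2)%R; set r2 := ((- B - sD) / 2)%R.
  have eP : P = (r1 * r2)%R.
    rewrite /r1 /r2; apply/eqP; rewrite -subr_eq0; apply/eqP.
    have -> : (P - (- B + sD) / 2 * ((- B - sD) / 2) = (sD ^+ 2 - D) / 4)%R.
      by rewrite /D; field.
    by rewrite sD2 subrr mul0r.
  have eB : B = (- (r1 + r2))%R by rewrite /r1 /r2; field.
  have hr : forall r, (r ^+ 2 + B * r + P = 0)%R -> (- rho <= r <= rho)%R.
    move=> r er; have := H _ (real_root er).
    by rewrite -complexr0 cmodE expr0n /= addr0 sqrtr_sqr ler_norml.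
  have h1 : (- rho <= r1 <= rho)%R by apply: hr; rewrite eB eP; ring.
  have h2 : (- rho <= r2 <= rho)%R by apply: hr; rewrite eB eP; ring.
  case/andP: h1 => h11 h12; case/andP: h2 => h21 h22.
  rewrite eB eP; split; nra.
set sD := Num.sqrt (- D).
have sD2 : (sD ^+ 2 = - D)%R by rewrite sqr_sqrtr // oppr_ge0 ltW.
have hz : ((- B / 2) +i* (sD / 2)) ^+ 2 + B%:C * ((- B / 2) +i* (sD / 2)) + P%:C = 0.
  apply/quad_eq; split.
    have -> : ((- B / 2) ^+ 2 - (sD / 2) ^+ 2 + B * (- B / 2) + P = (- D - sD ^+ 2) / 4)%R.
      by rewrite /D; field.
    by rewrite sD2 subrr mul0r.
  by field.
have := H _ hz; rewrite cmodE.
have -> : ((- B / 2) ^+ 2 + (sD / 2) ^+ 2 = P)%R.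
  have -> : ((- B / 2) ^+ 2 + (sD / 2) ^+ 2 = (B ^+ 2 + sD ^+ 2) / 4)%R by field.
  by rewrite sD2 /D; field.
have P0 : (0 <= P)%R by have := sqr_ge0 B; rewrite /D in hD; nra.
move=> hs.
have hP : (P <= rho ^+ 2)%R.
  by rewrite -(sqr_sqrtr P0) ler_pXn2r // ?nnegrE ?sqrtr_ge0.
rewrite /D in hD; split => //; nra.
Qed.

Lemma lb_final (p q sr s1 rho : R) :
  (0 <= p)%R -> (0 <= q)%R -> (0 < sr)%R -> (sr <= s1)%R -> (s1 <= 1)%R -> (sr < 1)%R ->
  (0 <= rho)%R ->
  let u := ((1 + p) * (1 + q))%R in
  let Ba := (p + q - u * sr)%R in let Bb := (p + q - u * s1)%R in
  (p * q <= rho ^+ 2)%R -> (0 <= rho ^+ 2 - Ba * rho + p * q)%R ->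
  (0 <= rho ^+ 2 + Bb * rho + p * q)%R -> (Ba ^+ 2 <= 4 * rho ^+ 2)%R ->
  (Bb ^+ 2 <= 4 * rho ^+ 2)%R ->
  ((Num.sqrt (1 - sr) - Num.sqrt (1 - s1)) / (Num.sqrt (1 - sr) + Num.sqrt (1 - s1)) <= rho)%R.
Proof.
move=> p0 q0 sr0 srs1 s11 sr1 rho0 u Ba Bb hP ha hb hBa hBb.
set al := Num.sqrt (1 - sr); set be := Num.sqrt (1 - s1).
have al0 : (0 < al)%R by rewrite sqrtr_gt0 subr_gt0.
have be0 : (0 <= be)%R by rewrite sqrtr_ge0.
have al2 : (al ^+ 2 = 1 - sr)%R by rewrite sqr_sqrtr // subr_ge0 ltW.
have be2 : (be ^+ 2 = 1 - s1)%R by rewrite sqr_sqrtr // subr_ge0.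
have u0 : (1 <= u)%R by rewrite /u; nra.
rewrite ler_pdivrMr; last by lra.
have hab : (be <= al)%R.
  by rewrite /al /be ler_sqrt; lra.
case: (lerP 1 rho) => hr1; first by nra.
case: (eqVneq rho 0) => [r0 | rn0].
  rewrite r0 in hBa hBb.
  have Ba0 : Ba = 0%R by apply/eqP; rewrite -sqrf_eq0 eq_le sqr_ge0 andbT; lra.
  have Bb0 : Bb = 0%R by apply/eqP; rewrite -sqrf_eq0 eq_le sqr_ge0 andbT; lra.
  have es : sr = s1.
    have : (u * sr = u * s1)%R by move: Ba0 Bb0; rewrite /Ba /Bb; lra.
    by move/(mulfI (lt0r_neq0 (lt_le_trans ltr01 u0))).
  by rewrite r0 mul0r /al /be es subrr.
have rpos : (0 < rho)%R by rewrite lt_def rn0.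
have eBa : (Ba = u * (1 - sr) - 1 - p * q)%R by rewrite /Ba /u; ring.
have eBb : (Bb = u * (1 - s1) - 1 - p * q)%R by rewrite /Bb /u; ring.
have hub : ((1 - rho) ^+ 2 <= u * (1 - s1))%R.
  have : (rho * (1 - rho) ^+ 2 <= rho * (u * (1 - s1)))%R.
    rewrite eBb in hb; nra.
  by rewrite ler_pM2l.
have hua : (u * (1 - sr) <= (1 + rho) ^+ 2)%R.
  have : (rho * (u * (1 - sr)) <= rho * (1 + rho) ^+ 2)%R.
    rewrite eBa in ha; nra.
  by rewrite ler_pM2l.
have key : ((al * (1 - rho)) ^+ 2 <= (be * (1 + rho)) ^+ 2)%R.
  rewrite !exprMn al2 be2.
  have ha0 : (0 <= 1 - sr)%R by lra.
  have hb0 : (0 <= 1 - s1)%R by lra.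
  nra.
have hA : (0 <= al * (1 - rho))%R by apply: mulr_ge0; lra.
have hB : (0 <= be * (1 + rho))%R by apply: mulr_ge0; lra.
have key2 : (al * (1 - rho) <= be * (1 + rho))%R by nra.
nra.
Qed.

Lemma ub_choice (sr s1 : R) :
  (0 <= sr)%R -> (sr <= s1)%R -> (s1 <= 1)%R -> (sr < 1)%R ->
  let v := ((Num.sqrt (1 - sr) - Num.sqrt (1 - s1)) / (Num.sqrt (1 - sr) + Num.sqrt (1 - s1)))%R in
  exists sm bg : R, [/\ (0 <= sm)%R, (sm <= v)%R, (sm <= bg)%R, (sm * bg = v ^+ 2)%R &
    forall mu, (sr <= mu)%R -> (mu <= s1)%R ->
      ((sm + bg - (1 + sm) * (1 + bg) * mu) ^+ 2 <= 4 * (sm * bg))%R].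
Proof.
move=> sr0 srs1 s11 sr1 v.
set al := Num.sqrt (1 - sr); set be := Num.sqrt (1 - s1).
have al0 : (0 < al)%R by rewrite sqrtr_gt0 subr_gt0.
have be0 : (0 <= be)%R by rewrite sqrtr_ge0.
have al2 : (al ^+ 2 = 1 - sr)%R by rewrite sqr_sqrtr // subr_ge0 ltW.
have be2 : (be ^+ 2 = 1 - s1)%R by rewrite sqr_sqrtr // subr_ge0.
have hab : (be <= al)%R by rewrite /al /be ler_sqrt; lra.
have D0 : (al + be != 0)%R by apply: lt0r_neq0; lra.
set u0 := (4 / (al + be) ^+ 2)%R.
have ev : v = ((al - be) / (al + be))%R by [].
have v0 : (0 <= v)%R by rewrite ev divr_ge0 //; lra.
have ua : (u0 * al ^+ 2 = (1 + v) ^+ 2)%R by rewrite /u0 ev; field.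
have ub : (u0 * be ^+ 2 = (1 - v) ^+ 2)%R by rewrite /u0 ev; field.
have u0p : (0 < u0)%R by rewrite /u0 divr_gt0 // exprn_gt0 //; lra.
set S := (u0 - 1 - v ^+ 2)%R.
have hS1 : (2 * v <= S)%R.
  have : (u0 * al ^+ 2 <= u0)%R by rewrite al2; nra.
  by rewrite ua /S; nra.
set Dl := (S ^+ 2 - 4 * v ^+ 2)%R.
have Dl0 : (0 <= Dl)%R by rewrite /Dl; nra.
set sq := Num.sqrt Dl.
have sq0 : (0 <= sq)%R by rewrite sqrtr_ge0.
have sq2 : (sq ^+ 2 = Dl)%R by rewrite sqr_sqrtr.
have sqS : (sq <= S)%R.
  have : (sq ^+ 2 <= S ^+ 2)%R by rewrite sq2 /Dl; nra.
  by nra.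
exists ((S - sq) / 2)%R, ((S + sq) / 2)%R.
have prod : ((S - sq) / 2 * ((S + sq) / 2) = v ^+ 2)%R.
  have -> : ((S - sq) / 2 * ((S + sq) / 2) = (S ^+ 2 - sq ^+ 2) / 4)%R by field.
  by rewrite sq2 /Dl; field.
have us : ((1 + (S - sq) / 2) * (1 + (S + sq) / 2) = u0)%R.
  have -> : ((1 + (S - sq) / 2) * (1 + (S + sq) / 2) = 1 + S + (S - sq) / 2 * ((S + sq) / 2))%R by field.
  by rewrite prod /S; ring.
have ssum : ((S - sq) / 2 + (S + sq) / 2 = S)%R by field.
split.
- by lra.
- have h1 : ((S - sq) / 2 <= (S + sq) / 2)%R by lra.
  have h0 : (0 <= (S - sq) / 2)%R by lra.
  nra.
- by lra.
- exact: prod.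
move=> mu h1 h2; rewrite ssum us prod.
have Bup : (S - u0 * mu <= 2 * v)%R.
  have : (S - u0 * sr = 2 * v)%R.
    have -> : (S - u0 * sr = u0 * (1 - sr) - 1 - v ^+ 2)%R by rewrite /S; ring.
    by rewrite -al2 ua; ring.
  by nra.
have Blo : (- (2 * v) <= S - u0 * mu)%R.
  have : (S - u0 * s1 = - (2 * v))%R.
    have -> : (S - u0 * s1 = u0 * (1 - s1) - 1 - v ^+ 2)%R by rewrite /S; ring.
    by rewrite -be2 ub; ring.
  by nra.
nra.
Qed.

End Q.

Section M.
Variable R : realType.
Local Notation C := (R[i]).
Local Notation toC := (real_complex R).
Variables (m n1 n2 : nat) (A : 'M[R]_(m, n1 + n2)).
Hypothesis rkA : \rank A = (n1 + n2)%N.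
Hypothesis o1 : (lsubmx A)^T *m lsubmx A = 1%:M.
Hypothesis o2 : (rsubmx A)^T *m rsubmx A = 1%:M.
Local Notation A1 := (lsubmx A).
Local Notation A2 := (rsubmx A).
Local Notation Cm := ((rsubmx A)^T *m lsubmx A).
Local Notation Cc := (map_mx toC Cm).

Lemma one_sub_N : 1%:M - Cm *m Cm^T =
   (A2 - A1 *m Cm^T)^T *m (A2 - A1 *m Cm^T).
Proof.
have tC : Cm^T = A1^T *m A2 by rewrite trmx_mul trmxK.
rewrite tC; set B := A1^T *m A2.
have eC : Cm = B^T by rewrite /B trmx_mul trmxK.
rewrite eC.
have tr : (A2 - A1 *m B)^T = A2^T - B^T *m A1^T by rewrite linearB /= trmx_mul.
have e1 : A2^T *m (A1 *m B) = B^T *m B by rewrite mulmxA -eC.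
have e2 : B^T *m A1^T *m A2 = B^T *m B by rewrite -mulmxA.
have e3 : B^T *m A1^T *m (A1 *m B) = B^T *m B.
  by rewrite -mulmxA (mulmxA A1^T) o1 mul1mx.
rewrite tr mulmxBl !mulmxBr o2 e1 e2 e3.
by rewrite subrr subr0.
Qed.

Lemma eigN (y : 'rV[C]_n2) (mu : C) : y != 0 ->
  y *m map_mx toC (Cm *m Cm^T) = mu *: y ->
  [/\ 0 <= mu, mu < 1 & (mu = 0 -> y *m Cc = 0)].
Proof.
move=> yn0 Hy.
have [mu_ge0 mu0] : 0 <= mu /\ (mu = 0 -> y *m (map_mx toC Cm^T)^T = 0).
  by apply: psd_eig => //; rewrite trmxK.
have Hy2 : y *m map_mx toC ((A2 - A1 *m Cm^T)^T *m (A2 - A1 *m Cm^T)) = (1 - mu) *: y.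
  rewrite -one_sub_N map_mxB map_mx1 mulmxBr mulmx1 Hy.
  by rewrite scalerBl scale1r.
have [h1 h2] := psd_eig yn0 Hy2.
split => //; last by move=> /mu0; rewrite map_trmx trmxK.
rewrite lt_def -subr_ge0 h1 andbT; apply/eqP => mu1.
have := h2; rewrite mu1 subrr => /(_ erefl).
rewrite map_trmx linearB /= trmx_mul trmxK map_mxB map_mxM mulmxBr.
move=> /eqP; rewrite subr_eq0 => /eqP E.
set u := row_mx (- (y *m Cc)) y.
have uA : u *m (map_mx toC A)^T = 0.
  rewrite -[A]hsubmxK map_row_mx tr_row_mx mul_row_col !map_trmx.
  by rewrite E mulNmx mulmxA addNr.
have rf : row_free (map_mx toC A)^T.
  by rewrite /row_free mxrank_tr mxrank_map rkA.
have u0 : u = 0.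
  by apply: (row_free_inj rf); rewrite uA mul0mx.
have : rsubmx u = 0 by rewrite u0 linear0.
by rewrite row_mxKr => y0; rewrite y0 eqxx in yn0.
Qed.

End M.

Section SR.
Variable R : realType.
Local Notation C := (R[i]).

Lemma cmodR (x : R) : cmod (x%:C)%C = `|x|.
Proof. by rewrite -complexr0 cmodE expr0n /= addr0 sqrtr_sqr. Qed.

Lemma cmod0 : cmod (0 : C) = 0.
Proof. by rewrite -[0 : C]/((0 : R)%:C)%C cmodR normr0. Qed.

Lemma srad_ge n (M : 'M[R]_n) z : z \in ceigs M -> cmod z <= spectral_radius M.
Proof. by move=> zin; rewrite /spectral_radius; apply: le_bigmax_seq. Qed.

Lemma srad_ge0 n (M : 'M[R]_n) : 0 <= spectral_radius M.
Proof.
rewrite /spectral_radius; elim: (ceigs M) => [|z l IH]; rewrite ?big_nil ?big_cons //.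
by rewrite le_max IH orbT.
Qed.

Lemma srad_le n (M : 'M[R]_n) x : 0 <= x -> (forall z, z \in ceigs M -> cmod z <= x) ->
  spectral_radius M <= x.
Proof.
move=> x0 H; rewrite /spectral_radius big_seq_cond; apply: bigmax_le => // z.
by rewrite andbT; apply: H.
Qed.
End SR.

Section Main.
Variable R : realType.
Local Notation C := (R[i]).
Local Notation toC := (real_complex R).
Variables (m n1 n2 : nat) (A : 'M[R]_(m, n1 + n2)).
Hypothesis rkA : \rank A = (n1 + n2)%N.
Hypothesis o1 : (lsubmx A)^T *m lsubmx A = 1%:M.
Hypothesis o2 : (rsubmx A)^T *m rsubmx A = 1%:M.
Hypothesis rkC : \rank ((rsubmx A)^T *m lsubmx A) = minn n1 n2.
Local Notation Cm := ((rsubmx A)^T *m lsubmx A).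
Local Notation Cc := (map_mx toC Cm).
Local Notation N := (Cm *m Cm^T).
Local Notation L := [seq complex.Re z | z <- ceigs N].

Lemma cmxN : cmx N = Cc *m Cc^T.
Proof. by rewrite cmxE map_mxM map_trmx. Qed.

Lemma eig_ceigsN mu : mu \in ceigs N -> exists2 y : 'rV[C]_n2, y != 0 & y *m (Cc *m Cc^T) = mu *: y.
Proof.
by rewrite ceigsP => /eigenvalueP [y Hy yn0]; exists y => //; rewrite -cmxN.
Qed.

Lemma mapN : map_mx toC N = Cc *m Cc^T.
Proof. by rewrite map_mxM map_trmx. Qed.

Lemma ceigsN_real mu : mu \in ceigs N ->
  [/\ mu = ((complex.Re mu)%:C)%C, 0 <= complex.Re mu & complex.Re mu < 1].
Proof.
move=> /eig_ceigsN [y yn0 Hy].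
have [h0 h1 _] := eigN rkA o1 o2 yn0 (etrans (congr1 (mulmx y) mapN) Hy).
move: h0 h1; case: mu {Hy} => a b /=.
rewrite lecE ltcE /= => /andP [/eqP -> ha] /andP [_ hb].
by split.
Qed.

Lemma rfC : (n2 <= n1)%N -> row_free Cc.
Proof. by move=> h; rewrite /row_free mxrank_map rkC; apply/eqP/minn_idPr. Qed.

Lemma rfCT : (n1 <= n2)%N -> row_free Cc^T.
Proof. by move=> h; rewrite /row_free mxrank_tr mxrank_map rkC; apply/eqP/minn_idPl. Qed.

Lemma countL0 : count (pred1 0) L = (n2 - minn n1 n2)%N.
Proof.
have -> : count (pred1 0) L = count (pred1 0) (ceigs N).
  rewrite count_map; apply: eq_in_count => mu /ceigsN_real [E _ _] /=.
  by rewrite [in RHS]E -[0 : C]/((0 : R)%:C)%C (inj_eq (@complexI R)).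
case: (leqP n2 n1) => h.
  rewrite subnn; apply/eqP; rewrite -leqn0 leqNgt -has_count.
  apply/hasP => [[mu muin /eqP mu0]].
  move: muin => /eig_ceigsN [y yn0 Hy].
  have [_ _ h3] := eigN rkA o1 o2 yn0 (etrans (congr1 (mulmx y) mapN) Hy).
  have y0 : y = 0 by apply: (row_free_inj (rfC h)); rewrite h3 // mul0mx.
  by rewrite y0 eqxx in yn0.
have hs := sylvester Cc.
rewrite -cmxN ceigs_char prod_split mulrA -exprD in hs.
have K0 : (char_poly (Cc^T *m Cc)).[0] != 0.
  apply/negP; rewrite -/(root _ 0) -eigenvalue_root_char => /eigenvalueP [x Hx xn0].
  have eK : Cc^T *m Cc = map_mx toC (Cm^T *m Cm) by rewrite [RHS]map_mxM map_trmx.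
  rewrite eK in Hx.
  have [_ hx] := psd_eig xn0 Hx.
  have x0 : x = 0 by apply: (row_free_inj (rfCT (ltnW h))); rewrite hx // mul0mx.
  by rewrite x0 eqxx in xn0.
have := Xpow_eq K0 (prod_nz0 _) hs.
by move=> e; rewrite [in RHS]e addKn.
Qed.

Lemma n_pos : Cm != 0 -> (0 < n1)%N /\ (0 < n2)%N.
Proof.
move=> hC; split; rewrite lt0n; apply/eqP => e; move/eqP: hC; apply.
  by apply/matrixP => i j; exfalso; have := ltn_ord j; move: (nat_of_ord j); rewrite e.
by apply/matrixP => i j; exfalso; have := ltn_ord i; move: (nat_of_ord i); rewrite e.
Qed.

Lemma inL_ceigs x : x \in L -> ((x%:C)%C \in ceigs N).
Proof.
by move=> /mapP [mu muin ->]; have [E _ _] := ceigsN_real muin; rewrite -E.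
Qed.

Lemma spec_facts : Cm != 0 ->
  let sr := eig_desc (minn n1 n2) N in let s1 := eig_desc 1 N in
  [/\ 0 < sr, sr <= s1, s1 < 1, ((sr%:C)%C \in ceigs N) & ((s1%:C)%C \in ceigs N)] /\
     (forall mu, mu \in ceigs N -> complex.Re mu <= s1) /\
     (forall mu, mu \in ceigs N -> mu != 0 -> sr <= complex.Re mu).
Proof.
move=> hC sr s1; have [p1 p2] := n_pos hC.
have sL : size L = n2 by rewrite size_map size_ceigs.
have r0 : (0 < minn n1 n2)%N by rewrite leq_min p1 p2.
have rL : (minn n1 n2 <= size L)%N by rewrite sL geq_minr.
have ge0 : forall x, x \in L -> 0 <= x.
  by move=> x /mapP [mu /ceigsN_real [_ h _] ->].
have lt1 : forall x, x \in L -> x < 1.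
  by move=> x /mapP [mu /ceigsN_real [_ _ h] ->].
have [hpos hbd] := S_pos r0 rL ge0 (etrans countL0 (congr1 (subn^~ _) (esym sL))).
have srL : sr \in L by apply: nth_S_in; rewrite (ltn_predK r0).
have s1L : s1 \in L by apply: nth_S_in; rewrite sL.
split; [split => // | split].
- by apply: ge_nth => //; rewrite (ltn_predK r0).
- exact: lt1.
- exact: inL_ceigs.
- exact: inL_ceigs.
- by move=> mu muin; apply: max_S; apply: map_f.
move=> mu muin mun0; apply: hbd; first by apply: map_f.
have [E _ _] := ceigsN_real muin.
by apply: contra mun0 => /eqP h; rewrite E h.
Qed.

Lemma rootz_in (g1 g2 s : R) (z : C) : 1 <= g1 -> 1 <= g2 -> 0 < s ->
  ((s%:C)%C \in ceigs N) ->
  let p := g1 - 1 in let q := g2 - 1 in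
  z ^+ 2 + ((p + q - (1 + p) * (1 + q) * s)%:C)%C * z + ((p * q)%:C)%C = 0 ->
  cmod z <= spectral_radius (gd_iter_mx Cm g1 g2).
Proof.
move=> g11 g21 s0 sin p q hq.
have rel : (z + (g1%:C)%C - 1) * (z + (g2%:C)%C - 1) = (g1%:C)%C * (g2%:C)%C * z * (s%:C)%C.
  apply/eqP; rewrite -subr_eq0; apply/eqP; rewrite -[RHS]hq /p /q.
  rewrite !(rmorphB, rmorphD, rmorphM, rmorph1) /=; ring.
case: (eqVneq (z + (g1%:C)%C - 1) 0) => hz.
  move: rel; rewrite hz mul0r => /esym /eqP; rewrite !mulf_eq0 => h.
  have z0 : z = 0.
    move: h; rewrite -[0 : C]/((0 : R)%:C)%C !(inj_eq (@complexI R)).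
    rewrite (gt_eqF s0) (gt_eqF (lt_le_trans ltr01 g11)) (gt_eqF (lt_le_trans ltr01 g21)).
    by rewrite !orbF /= => /eqP.
  by rewrite z0 cmod0 srad_ge0.
apply: srad_ge; rewrite ceigsP cmx_gd.
have [y yn0 Hy] := eig_ceigsN sin.
exact: (gdc_eig_build yn0 Hy hz rel).
Qed.

Lemma lower (g1 g2 : R) : Cm != 0 -> 1 <= g1 -> 1 <= g2 ->
  (Num.sqrt (1 - eig_desc (minn n1 n2) N) - Num.sqrt (1 - eig_desc 1 N)) /
  (Num.sqrt (1 - eig_desc (minn n1 n2) N) + Num.sqrt (1 - eig_desc 1 N))
   <= spectral_radius (gd_iter_mx Cm g1 g2).
Proof.
move=> hC g11 g21.
have [[sr0 srs1 s11 srin s1in] _] := spec_facts hC.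
set sr := eig_desc (minn n1 n2) N in sr0 srs1 srin *.
set s1 := eig_desc 1 N in srs1 s11 s1in *.
set rho := spectral_radius _.
have rho0 : 0 <= rho by apply: srad_ge0.
have [hPa _ ha hBa] := lb_quad rho0 (fun z hz => rootz_in g11 g21 sr0 srin hz).
have s10 : 0 < s1 by apply: lt_le_trans srs1.
have [_ hb _ hBb] := lb_quad rho0 (fun z hz => rootz_in g11 g21 s10 s1in hz).
apply: (lb_final _ _ sr0 srs1 (ltW s11) (le_lt_trans srs1 s11) rho0 hPa ha hb hBa hBb).
  by rewrite subr_ge0.
by rewrite subr_ge0.
Qed.

Lemma cmod_neg (p : R) (z : C) : 0 <= p -> z + ((1 + p)%:C)%C - 1 = 0 -> cmod z = p.
Proof.
move=> p0 hz.
have -> : z = (((- p)%:C)%C).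
  apply/eqP; rewrite -subr_eq0; apply/eqP; rewrite -[RHS]hz.
  rewrite !(rmorphN, rmorphD, rmorph1) /=; ring.
by rewrite cmodR normrN ger0_norm.
Qed.

Lemma upper_core (p q v : R) : Cm != 0 ->
  0 <= p -> 0 <= q -> 0 <= v -> p * q = v ^+ 2 ->
  (forall mu, eig_desc (minn n1 n2) N <= mu -> mu <= eig_desc 1 N ->
      (p + q - (1 + p) * (1 + q) * mu) ^+ 2 <= 4 * (p * q)) ->
  ((n2 < n1)%N -> p <= v) -> ((n1 <= n2)%N -> q <= v) ->
  forall z, z \in ceigs (gd_iter_mx Cm (1 + p) (1 + q)) -> cmod z <= v.
Proof.
move=> hC p0 q0 v0 pqv hq hpv hqv z.
have [_ [hmax hmin]] := spec_facts hC.
set g1 := (1 + p); set g2 := (1 + q).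
have g10 : (g1%:C)%C != 0.
  by rewrite -[0 : C]/((0 : R)%:C)%C (inj_eq (@complexI R)) /g1; apply: lt0r_neq0; lra.
have g20 : (g2%:C)%C != 0.
  by rewrite -[0 : C]/((0 : R)%:C)%C (inj_eq (@complexI R)) /g2; apply: lt0r_neq0; lra.
rewrite ceigsP cmx_gd => /eigenvalueP [w Hw wn0].
move: Hw wn0; rewrite -[w]hsubmxK; set x := lsubmx w; set y := rsubmx w.
move=> /gdc_eigE [E1 E2] wn0.
have E3 := gdc_eigN E1 E2.
case: (eqVneq y 0) => [y0 | yn0].
  have xn0 : x != 0 by apply: contra wn0 => /eqP ->; rewrite y0 row_mx0.
  move: E1 E2; rewrite y0 mul0mx !scaler0 => /eqP; rewrite scaler_eq0 (negbTE xn0) orbF => /eqP hz.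
  rewrite mul0mx scaler0 addr0 => /esym /eqP; rewrite scaler_eq0 oppr_eq0 (negbTE g10) /= => /eqP X0.
  case: (ltnP n2 n1) => hn.
    by rewrite (cmod_neg p0 hz) hpv.
  have : x = 0 by apply: (row_free_inj (rfCT hn)); rewrite X0 mul0mx.
  by move=> x0; rewrite x0 eqxx in xn0.
case: (eqVneq z 0) => [-> | zn0]; first by rewrite cmod0.
have den0 : (g1%:C)%C * (g2%:C)%C * z != 0 by rewrite !mulf_neq0.
set mu := ((z + (g1%:C)%C - 1) * (z + (g2%:C)%C - 1)) / ((g1%:C)%C * (g2%:C)%C * z).
have HyN : y *m (Cc *m Cc^T) = mu *: y.
  apply: (scalerI den0); rewrite -E3 scalerA; congr (_ *: _); by rewrite /mu [RHS]mulrC divfK.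
have muin : mu \in ceigs N by rewrite ceigsP cmxN; apply/eigenvalueP; exists y.
have [Emu mu0 _] := ceigsN_real muin.
have rel : (z + (g1%:C)%C - 1) * (z + (g2%:C)%C - 1) = (g1%:C)%C * (g2%:C)%C * z * mu.
  by rewrite /mu [_ * mu]mulrC divfK.
case: (eqVneq mu 0) => [mu0' | mun0].
  have [_ _ h3] := eigN rkA o1 o2 yn0 (etrans (congr1 (mulmx y) mapN) HyN).
  have yC : y *m Cc = 0 by apply: h3.
  case: (ltnP n2 n1) => hn.
    have : y = 0 by apply: (row_free_inj (rfC (ltnW hn))); rewrite yC mul0mx.
    by move=> y00; rewrite y00 eqxx in yn0.
  suff hz2 : z + (g2%:C)%C - 1 = 0 by rewrite (cmod_neg q0 hz2) hqv.
  move: rel; rewrite mu0' mulr0 => /eqP; rewrite mulf_eq0 => /orP [/eqP hz1 | /eqP //].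
  move: E2; rewrite HyN mu0' scale0r scaler0 addr0 => E2.
  have XC : x *m (Cc^T *m Cc) = 0.
    have : (- (g1%:C)%C) *: (x *m Cc^T *m Cc) = 0.
      by rewrite scalemxAl -E2 -scalemxAl yC scaler0.
    by move/eqP; rewrite scaler_eq0 oppr_eq0 (negbTE g10) /= mulmxA => /eqP.
  have X0 : x *m Cc^T = 0.
    case: (eqVneq x 0) => [-> | xn0]; first by rewrite mul0mx.
    have eK : Cc^T *m Cc = map_mx toC (Cm^T *m Cm) by rewrite [RHS]map_mxM map_trmx.
    have XC' : x *m map_mx toC (Cm^T *m Cm) = 0 *: x by rewrite -eK XC scale0r.
    by have [_ ->] := psd_eig xn0 XC'.
  move: E2; rewrite X0 scaler0 => /eqP; rewrite scaler_eq0 (negbTE yn0) orbF.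
  by move=> /eqP.
have mR : mu = (((complex.Re mu)%:C)%C) := Emu.
set mr := complex.Re mu in mR mu0.
have mrn0 : mr != 0 by apply: contra mun0 => /eqP h; rewrite mR h.
have h1 : eig_desc (minn n1 n2) N <= mr by apply: hmin.
have h2 : mr <= eig_desc 1 N by apply: hmax.
have hB := hq _ h1 h2.
have qz : z ^+ 2 + (((p + q - (1 + p) * (1 + q) * mr)%:C)%C) * z + (((p * q)%:C)%C) = 0.
  have H0 : (z + (g1%:C)%C - 1) * (z + (g2%:C)%C - 1) - (g1%:C)%C * (g2%:C)%C * z * mu = 0.
    by rewrite rel subrr.
  rewrite -[RHS]H0 mR /g1 /g2 !(rmorphB, rmorphD, rmorphM, rmorph1) /=; ring.
rewrite (quad_mod qz hB) pqv sqrtr_sqr ger0_norm //.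
Qed.

Lemma upper : Cm != 0 ->
  exists g1 g2 : R, 1 <= g1 /\ 1 <= g2 /\ spectral_radius (gd_iter_mx Cm g1 g2) =
  (Num.sqrt (1 - eig_desc (minn n1 n2) N) - Num.sqrt (1 - eig_desc 1 N)) /
  (Num.sqrt (1 - eig_desc (minn n1 n2) N) + Num.sqrt (1 - eig_desc 1 N)).
Proof.
move=> hC.
have [[sr0 srs1 s11 _ _] _] := spec_facts hC.
have [sm [bg [sm0 smv smbg prod hq]]] :=
  ub_choice (ltW sr0) srs1 (ltW s11) (le_lt_trans srs1 s11).
set v := (_ / _) in smv prod *.
have v0 : 0 <= v by apply: le_trans smv.
have bg0 : 0 <= bg by apply: le_trans smbg.
case: (ltnP n2 n1) => hn.
  exists (1 + sm), (1 + bg); split; first by lra.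
  split; first by lra.
  apply/le_anti; rewrite lower ?andbT //; try lra.
  apply: srad_le => //; apply: (upper_core hC sm0 bg0 v0 prod hq).
    by [].
  by move=> h; exfalso; lia.
exists (1 + bg), (1 + sm); split; first by lra.
split; first by lra.
apply/le_anti; rewrite lower ?andbT //; try lra.
apply: srad_le => //; apply: (upper_core hC bg0 sm0 v0).
- by rewrite mulrC.
- by move=> mu h1 h2; have := hq mu h1 h2; rewrite (addrC sm bg) (mulrC (1 + sm)) (mulrC sm).
- by move=> h; exfalso; lia.
- by [].
Qed.

End Main.


End Aux.
Import Aux.
Unset Implicit Arguments. Set Strict Implicit.

Theorem mainTheorem14 (R : realType) (m n1 n2 : nat) (A : 'M[R]_(m, n1 + n2)) :
  \rank A = (n1 + n2)%N ->
  (lsubmx A)^T *m lsubmx A = 1%:M ->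
  (rsubmx A)^T *m rsubmx A = 1%:M ->
  let C := (rsubmx A)^T *m lsubmx A in
  C != 0 ->
  \rank C = minn n1 n2 ->
  let r := minn n1 n2 in
  let v := (Num.sqrt (1 - eig_desc r (C *m C^T)) - Num.sqrt (1 - eig_desc 1 (C *m C^T))) /
           (Num.sqrt (1 - eig_desc r (C *m C^T)) + Num.sqrt (1 - eig_desc 1 (C *m C^T))) in
  (forall g1 g2 : R, 1 <= g1 -> 1 <= g2 -> v <= spectral_radius (gd_iter_mx C g1 g2)) /\
  (exists g1 g2 : R, 1 <= g1 /\ 1 <= g2 /\ spectral_radius (gd_iter_mx C g1 g2) = v).
Proof.
move=> rkA o1 o2 C hC rkC r v; split.
  by move=> g1 g2 h1 h2; apply: lower.
by apply: upper.
Qed.
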